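(* Let $p$ be prime, $f\ge1$, let $r_0,\dots,r_{f-1}$ be integers in $[1,p]$, let $J\subset\{0,\dots,f-1\}$, and set $h_i=r_i$ if $i\in J$ and $h_i=0$ otherwise. Then $$\sum_{i=0}^{f-1}p^{f-1-i}h_i\equiv\sum_{i=0}^{f-1}p^{f-1-i}(r_i-h_i)\pmod{p^f-1}$$ if and only if either: $(r_0,\dots,r_{f-1})\in\mathcal P$ and $J$ satisfies, for all $i$ (indices mod $f$): if $(r_{i-1},r_i)=(p,1)$ then ($i+1\in J\iff i\notin J$), and if $(r_{i-1},r_i)\in\{(1,p-1),(p-1,p-1)\}$ then ($i+1\in J\iff i\in J$); or else $p=2$, $(r_0,\dots,r_{f-1})=(2,\dots,2)$ and $J=\varnothing$ or $J=\{0,\dots,f-1\}$.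
   Context: $\mathcal P$ is the set of $f$-tuples $(r_0,\dots,r_{f-1})$ with every $r_i\in\{1,p-1,p\}$ such that, taking indices mod $f$ (so $r_f=r_0$): if $r_i=p$ then $r_{i+1}=1$, and if $r_i\in\{1,p-1\}$ then $r_{i+1}\in\{p-1,p\}$. *)

(* Defs.v *)
From mathcomp Require Import all_boot.
Set Implicit Arguments. Unset Strict Implicit. Unset Printing Implicit Defensive.

(* Indices are 'I_f; i+1 and i-1 modulo f are ordS i and ord_pred i. *)

Definition inP (p f : nat) (r : 'I_f -> nat) : Prop :=
  forall i : 'I_f,
    r i \in [:: 1; p.-1; p] /\
    (r i = p -> r (ordS i) = 1) /\
    (r i \in [:: 1; p.-1] -> r (ordS i) \in [:: p.-1; p]).

Definition hJ (f : nat) (r : 'I_f -> nat) (J : {set 'I_f}) (i : 'I_f) : nat :=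
  if i \in J then r i else 0.

Definition J_cond (p f : nat) (r : 'I_f -> nat) (J : {set 'I_f}) : Prop :=
  forall i : 'I_f,
    ((r (ord_pred i), r i) = (p, 1) -> ((ordS i \in J) <-> (i \notin J))) /\
    (((r (ord_pred i), r i) = (1, p.-1) \/ (r (ord_pred i), r i) = (p.-1, p.-1)) ->
       ((ordS i \in J) <-> (i \in J))).

(* Main.v *)
Require Import Defs.
From mathcomp Require Import all_boot.
From mathcomp Require Import all_order all_algebra zify ring.
Import GRing.Theory Num.Theory.
Set Implicit Arguments. Unset Strict Implicit.

Lemma ordS_iter n (i : 'I_n) k : val (iter k (@ordS n) i) = (i + k) %% n.
Proof.
elim: k => [|k IH] /=; first by rewrite addn0 modn_small.
by rewrite IH -addn1 modnDml addn1 addnS.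
Qed.

Lemma ordS_all n (P : 'I_n -> Prop) i :
  P i -> (forall x, P x -> P (ordS x)) -> forall j, P j.
Proof.
move=> Pi HS j.
have It : forall k, P (iter k (@ordS n) i) by elim=> //= k IH; apply: HS.
have -> : j = iter (j + n - i) (@ordS n) i.
  apply: val_inj; rewrite ordS_iter.
  have hi := ltn_ord i; have hj := ltn_ord j.
  have -> : i + (j + n - i) = j + n by lia.
  by rewrite modnDr modn_small.
exact: It.
Qed.

Section Helpers.
Local Open Scope ring_scope.

Lemma local (p r : nat) (b : bool) (x y : int) : (1 < p)%N -> (0 < r <= p)%N ->
  -1 <= x <= 1 -> -1 <= y <= 1 ->
  (if b then Posz r else - Posz r) = Posz p * x - y ->
  (x = 0 -> r = 1%N /\ y <> 0 /\ (b <-> y = -1)) /\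
  (x <> 0 -> (b <-> x = 1) /\ ((y = 0 /\ r = p) \/ (y = x /\ r = p.-1))).
Proof.
move=> hp hr hx hy.
have : x = -1 \/ x = 0 \/ x = 1 by lia.
case=> [->|[->|->]]; rewrite ?mulrN1 ?mulr0 ?mulr1; case: b; lia.
Qed.

Definition dn n (d : 'I_n.+1 -> int) (j : nat) : int := d (inord j).
Definition Ssum p n (d : 'I_n.+1 -> int) k : int :=
  \sum_(j < k) (p ^ (k.-1 - j))%:Z * dn d j.

Lemma S0 p n (d : 'I_n.+1 -> int) : Ssum p d 0 = 0.
Proof. by rewrite /Ssum big_ord0. Qed.

Lemma SS p n (d : 'I_n.+1 -> int) k : Ssum p d k.+1 = p%:Z * Ssum p d k + dn d k.
Proof.
rewrite /Ssum big_ord_recr /=.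
rewrite subnn expn0 mul1r; congr (_ + _).
rewrite mulr_sumr; apply: eq_bigr => j _.
case: k j => [|k] j; first by case: j.
rewrite [in LHS](_ : k.+1 - j = (k - j).+1)%N; last by rewrite subSn // -ltnS.
by rewrite expnS PoszM mulrA.
Qed.

Lemma Dsum p n (d : 'I_n.+1 -> int) : \sum_(i < n.+1) (p ^ (n - i))%:Z * d i = Ssum p d n.+1.
Proof. by rewrite /Ssum; apply: eq_bigr => i _; rewrite /dn inord_val. Qed.

Lemma tele p n (d : 'I_n.+1 -> int) :
  (exists q, \sum_(i < n.+1) (p ^ (n - i))%:Z * d i = q * ((p ^ n.+1)%:Z - 1)) <->
  (exists C : 'I_n.+1 -> int, forall i, d i = p%:Z * C i - C (ordS i)).
Proof.
split.
- case=> q Hq; exists (fun i => q * (p ^ i)%:Z - Ssum p d i) => i.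
  have Hs := SS p d i; rewrite /dn inord_val in Hs.
  case: (ltnP i n) => hi.
  + rewrite (_ : nat_of_ord (ordS i) = i.+1); last by rewrite /= modn_small.
    rewrite Hs expnS PoszM; ring.
  + have ei : nat_of_ord i = n by have := ltn_ord i; lia.
    rewrite (_ : nat_of_ord (ordS i) = 0%N); last by rewrite /= ei modnn.
    have H1 := SS p d n; rewrite -Dsum Hq expnS PoszM in H1.
    have dni : dn d n = d i by rewrite /dn; congr d; apply: val_inj; rewrite /= inordK ?ei.
    rewrite ei S0 expn0 -dni.
    transitivity (q * (p%:Z * (p ^ n)%:Z - 1) - p%:Z * Ssum p d n); first by rewrite H1; ring.
    ring.
- case=> C HC; exists (C ord0).
  have key : forall k, (k <= n)%N -> Ssum p d k = C ord0 * (p ^ k)%:Z - C (inord k).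
    elim=> [|k IH] hk.
      rewrite S0 expn0 mulr1 (_ : inord 0 = ord0); first by rewrite subrr.
      by apply: val_inj; rewrite /= inordK.
    rewrite SS IH ?(ltnW hk) // /dn.
    have := HC (inord k).
    rewrite (_ : ordS (inord k) = inord k.+1); last first.
      by apply: val_inj; rewrite /= !inordK ?modn_small //; lia.
    rewrite expnS PoszM => ->; ring.
  rewrite Dsum SS key // /dn.
  have := HC (inord n).
  rewrite (_ : ordS (inord n) = ord0); last first.
    by apply: val_inj; rewrite /= inordK // modnn.
  rewrite expnS PoszM => ->; ring.
Qed.

Lemma conv p n (r : 'I_n.+1 -> nat) J : (0 < p)%N ->
  ((\sum_(i < n.+1) p ^ (n - i) * hJ r J i
      = \sum_(i < n.+1) p ^ (n - i) * (r i - hJ r J i) %[mod p ^ n.+1 - 1])%N <->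
  exists q, \sum_(i < n.+1) (p ^ (n - i))%:Z *
              (if i \in J then (r i)%:Z else - (r i)%:Z) = q * ((p ^ n.+1)%:Z - 1)).
Proof.
move=> p0.
set A := (\sum_(i < n.+1) _)%N; set B := (\sum_(i < n.+1) _)%N.
have eAB : Posz A - Posz B = \sum_(i < n.+1) (p ^ (n - i))%:Z *
              (if i \in J then (r i)%:Z else - (r i)%:Z).
  rewrite /A /B !(big_morph Posz PoszD (erefl (Posz 0))) -sumrB.
  apply: eq_bigr => i _; rewrite /hJ; case: (i \in J); rewrite ?subnn ?subn0 ?muln0 ?PoszM ?subr0 ?mulrN ?sub0r //.
have em : Posz (p ^ n.+1 - 1) = (p ^ n.+1)%:Z - 1.
  by rewrite -subzn // expn_gt0 p0.
have -> : (A = B %[mod p ^ n.+1 - 1])%N <-> (Posz (p ^ n.+1 - 1) %| Posz A - Posz B)%Z.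
  rewrite -eqz_mod_dvd !modz_nat; split; first by move=> ->.
  by move/eqP => [].
rewrite eAB em; split; first by case/dvdzP => q Hq; exists q.
by case=> q Hq; apply/dvdzP; exists q.
Qed.

End Helpers.

Theorem mainTheorem10 (p f : nat) (r : 'I_f -> nat) (J : {set 'I_f}) :
  prime p -> 0 < f -> (forall i, 1 <= r i <= p) ->
  ((\sum_(i < f) p ^ (f.-1 - i) * hJ r J i
      = \sum_(i < f) p ^ (f.-1 - i) * (r i - hJ r J i) %[mod p ^ f - 1])
   <->
   ((inP p r /\ J_cond p r J) \/
    (p = 2 /\ (forall i, r i = 2) /\ (J = set0 \/ J = setT)))).
Proof.
move=> pr; case: f r J => // n r J _ rb.
have p2 : 1 < p by apply: prime_gt1.
apply: iff_trans (conv r J (ltnW p2)) _.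
apply: iff_trans (tele _ _) _.
split.
- case=> C HC.
  pose i0 := [arg max_(i > ord0) `|C i|%N].
  have Hmax : forall j, `|C j|%N <= `|C i0|%N.
    by rewrite /i0; case: arg_maxnP => // k _ Hk j; apply: Hk.
  have hb : `|C i0|%N <= 1 \/ (p = 2 /\ `|C i0|%N = 2).
    have := HC i0; have := Hmax (ordS i0); have := rb i0.
    case: (i0 \in J) => h1 h2 h3; nia.
  case: hb => [hb|[e hb]].
  + have Hc : forall j, (-1 <= C j <= 1)%R by move=> j; have := Hmax j; lia.
    have L : forall i, _ := fun i => local p2 (rb i) (Hc i) (Hc (ordS i)) (HC i).
    left; split.
    * move=> i; have := L i; have := L (ordS i); rewrite !inE; lia.
    * move=> i; have := L (ord_pred i); have := L i; have := L (ordS i).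
      rewrite ord_predK => La Lb Lc; split.
        case=> h1 h2; move: La Lb Lc (Hc (ordS i)); case: (i \in J); case: (ordS i \in J); lia.
      case=> [[h1 h2]|[h1 h2]]; move: La Lb Lc (Hc (ordS i)); case: (i \in J); case: (ordS i \in J); lia.
  + subst p.
    have c0 : C i0 = 2%R \/ C i0 = (-2)%R by lia.
    have prop : forall j, C j = C i0.
      apply: (@ordS_all _ (fun j => C j = C i0) i0) => // x hx.
      have := HC x; have := Hmax (ordS x); have := rb x.
      case: (x \in J); lia.
    right; split => //; split.
      move=> i; have := HC i; rewrite (prop i) (prop (ordS i)); have := rb i.
      case: (i \in J); lia.
    case: c0 => hc; [right|left]; apply/setP => i; rewrite !inE;
      have := HC i; rewrite (prop i) (prop (ordS i)) hc; have := rb i;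
      case: (i \in J); lia.
- case=> [[HP HJ]|[e [hr hJ]]].
  + exists (fun i => if r (ord_pred i) == p then 0%R else if i \in J then 1%R else (-1)%R).
    move=> i /=; rewrite ordSK.
    have P1 := HP (ord_pred i); rewrite ord_predK in P1.
    have P2 := HP i.
    have [J1 J2] := HJ i.
    have J1' : r (ord_pred i) = p -> r i = 1 -> (ordS i \in J <-> i \notin J).
      by move=> a b; apply: J1; rewrite a b.
    have J2' : r (ord_pred i) \in [:: 1; p.-1] -> r i = p.-1 -> (ordS i \in J <-> i \in J).
      move=> a b; apply: J2; rewrite b; move: a; rewrite !inE => /orP[]/eqP->; by [left|right].
    clear J1 J2 HJ HP.
    have := rb i; move: J1' J2' P1 P2; rewrite !inE.
    case: (r (ord_pred i) =P p); case: (r i =P p); case: (i \in J); case: (ordS i \in J);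
      lia.
  + case: hJ => ->; [exists (fun _ => (-2)%R) | exists (fun _ => 2%R)] => i;
      rewrite ?inE hr e //.
Qed.
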